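(* Let $\mathcal E\in\mathrm{Bun}_{\mathcal G'}$ be the bundle associated to a pair $(\tilde w,g)\in\widetilde W\times\mathrm{GL}_n/Q$. (i) If $g\in X_i$ for some $2\le i\le n$, then $T_1\subseteq(\mathrm{Aut}_{\mathcal G'}(\mathcal E))^\circ$. (ii) If $g\in X_{1j}\subseteq X_1-\mathring X_1$ for some $2\le j\le n$, then $T_j\subseteq(\mathrm{Aut}_{\mathcal G'}(\mathcal E))^\circ$. (iii) If $\tilde w\notin\Omega$, $g=\mathring g$, and $\beta\in\Phi(G(\tilde w))$, then $Y_{\tilde\beta}\subseteq(\mathrm{Aut}_{\mathcal G'}(\mathcal E))^\circ$. (iv) If $\tilde w\in\Omega$ and $g\in\mathring X_1$, then $\mathrm{Aut}_{\mathcal G'}(\mathcal E)$ is trivial.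
   Context: Setting: $k$ finite field, $G=\mathrm{GL}_n$, $X=\mathbb P^1$ with coordinate $s$ at $\infty$, $t=s^{-1}$ at $0$; $T$ diagonal torus, $B$/$B^-$ upper/lower triangular, $Q$ mirabolic (last row $(0,\dots,0,1)$). $I\subset\mathrm{GL}_n(k[[s]])$ preimage of $B$ at $s=0$; $I^{\mathrm{opp}}\subset\mathrm{GL}_n(k[[t]])$ preimage of $B^-$ at $t=0$; $\mathtt Q$ preimage of $Q$ in $\mathrm{GL}_n(\mathcal O_1)$; $I^-=\{g\in\mathrm{GL}_n(k[s^{-1}]):g|_{s^{-1}=0}\in B^-\}$. $\widetilde W$ = monomial matrices $w\,\mathrm{diag}(s^{\lambda_i})$; $\Omega=\{\tilde w:\tilde wI\tilde w^{-1}=I\}$. $S(\tilde w)=I^-\cap\tilde wI\tilde w^{-1}$, $\mathrm{ev}_1$ = evaluation at $s=1$, $G(\tilde w)=\mathrm{ev}_1(S(\tilde w))$; $\Phi(H)$ = set of roots $\alpha$ with $U_\alpha\subseteq H$. $\mathcal G'$ is the group scheme over $X$ with generic fibre $\mathrm{GL}_n$ and levels $I^{\mathrm{opp}}$ at $0$, $\mathtt Q$ at $1$, $I$ at $\infty$, hyperspecial elsewhere. The bundle associated to $(\tilde w,g)$: its image in $\mathrm{Bun}(I^{\mathrm{opp}},I)(k)=I^-\backslash\mathrm{GL}_n(k((s)))/I$ is the double coset of $\tilde w$, and $g\in\mathrm{GL}_n/Q$ is its level structure at $1$ in the fibre $\mathrm{GL}_n/Q$ of the forgetful map; then $\mathrm{Aut}_{\mathcal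 G'}(\mathcal E)=\{h\in S(\tilde w):\mathrm{ev}_1(h)\in\mathrm{Stab}_{G(\tilde w)}(g)\}$. Notation in $\mathrm{GL}_n/Q$: $T_j=\{\mathrm{diag}(1,\dots,t_j,\dots,1)\}$; $w_i$ permutation matrix of the transposition $(i\,n)$; $X_i=Bw_iQ/Q$; $X_1=T\prod_{j\ge2}U_{\alpha_{1j}}w_1Q/Q$ and $X_{1j}\subset X_1$ the elements with trivial $U_{\alpha_{1j}}$-component; $\mathring X_1=X_1-\bigcup_{j=2}^nX_{1j}$; $\mathring g=\exp(\sum_{j=2}^nE_{1j})w_1Q$, so $\mathring X_1=T\mathring g$. For a root $\beta=\alpha_{pq}$, $Y_\beta\subset TU_\beta$ consists of $t\,u(t)$, $t\in T_q$, with $u(t)=\exp((1-t_q)E_{pq})$ if $p\neq1\neq q$ and $u(t)=\exp((t_q-1)E_{pq})$ otherwise ($\exp(N)=1+N$). For $\beta\in\Phi(G(\tilde w))$, $\tilde\beta$ is an affine root whose root subgroup lies in $S(\tilde w)$ and whose finite part is $\beta$; $\mathrm{ev}_1$ gives an isomorphism $TU_{\tilde\beta}\simeq TU_\beta$ and $Y_{\tilde\beta}$ is the preimage of $Y_\beta$. *)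

(* Defs.v *)
(* Conventions:
   - indices are 0-based: paper index p corresponds to ordinal value p-1;
   - loop-group elements are matrices over {poly K}, the variable being t = s^{-1};
   - formal Laurent series in s are coefficient arrays int -> K (no ring structure
     is needed: we only conjugate by monomial matrices, written out explicitly). *)
From HB Require Import structures.
From mathcomp Require Import all_boot all_order all_algebra all_fingroup.
Import GRing.Theory.
Local Open Scope ring_scope.

Section Defs.
Variables (K : fieldType) (n : nat).

(* M c d e = coefficient of s^e in the (c,d) entry. *)
Definition LArr := 'I_n -> 'I_n -> int -> K.

(* tilde w = w * diag(s^{lam_i}) with w = perm_mx sigma, i.e.
   tilde w (b,d) = [sigma b == d] s^{lam d},  tilde w^{-1} (c,a) = [sigma a == c] s^{- lam c}.
   conjInv sigma lam M = tilde w^{-1} * M * tilde w, matrix product written out. *)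
Definition conjInv (sigma : 'S_n) (lam : 'I_n -> int) (M : LArr) : LArr :=
  fun c d e => \sum_(a < n) \sum_(b < n)
     (if (sigma a == c) && (sigma b == d) then M a b (e + lam c - lam d) else 0).

Definition red0 (M : LArr) : 'M[K]_n := \matrix_(c, d) M c d 0.

Definition upper (A : 'M[K]_n) := forall i j : 'I_n, (j < i)%N -> A i j = 0.
Definition lower (A : 'M[K]_n) := forall i j : 'I_n, (i < j)%N -> A i j = 0.
Definition inB (A : 'M[K]_n) := upper A /\ A \in unitmx.
Definition inBm (A : 'M[K]_n) := lower A /\ A \in unitmx.

(* Iwahori I = preimage of B in GL_n(K[[s]]): entries in K[[s]] and reduction in B
   (a matrix over K[[s]] is invertible iff its reduction is). *)
Definition inIwahori (M : LArr) :=
  (forall c d e, e < 0 -> M c d e = 0) /\ inB (red0 M).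

(* tilde w in Omega  iff  tilde w I tilde w^{-1} = I *)
Definition inOmega (sigma : 'S_n) (lam : 'I_n -> int) :=
  forall M : LArr, inIwahori (conjInv sigma lam M) <-> inIwahori M.

Definition LMat := 'M[{poly K}]_n.

(* entry h a b = sum_m c_m t^m = sum_m c_m s^{-m} *)
Definition toLArr (h : LMat) : LArr := fun a b e =>
  match e with
  | Posz O => (h a b)`_0
  | Posz (S _) => 0
  | Negz m => (h a b)`_(S m)
  end.

Definition ev0 (h : LMat) : 'M[K]_n := map_mx (fun p => p.[0]) h.
Definition ev1 (h : LMat) : 'M[K]_n := map_mx (fun p => p.[1]) h.
Definition constM (A : 'M[K]_n) : LMat := map_mx polyC A.

Definition inGLpoly (h : LMat) := \det h \is a GRing.unit.
Definition inIminus (h : LMat) := inGLpoly h /\ inBm (ev0 h).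
(* S(tilde w) = I^- cap tilde w I tilde w^{-1} *)
Definition inS sigma lam (h : LMat) :=
  inIminus h /\ inIwahori (conjInv sigma lam (toLArr h)).
Definition inG sigma lam (x : 'M[K]_n) := exists2 h, inS sigma lam h & ev1 h = x.

Definition inQ (A : 'M[K]_n) :=
  (forall i j : 'I_n, nat_of_ord i = n.-1 -> A i j = (nat_of_ord j == n.-1)%:R)
  /\ A \in unitmx.
Definition cosetEq (g g' : 'M[K]_n) := exists2 q, inQ q & g = g' *m q.
Definition stab sigma lam (g x : 'M[K]_n) :=
  inG sigma lam x /\ cosetEq (x *m g) g.
Definition inAut sigma lam (g : 'M[K]_n) (h : LMat) :=
  inS sigma lam h /\ stab sigma lam g (ev1 h).

(* U_{alpha_pq} = { exp(x E_pq) = 1 + x E_pq } *)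
Definition Eroot (p q : 'I_n) (x : K) : 'M[K]_n := 1%:M + x *: delta_mx p q.
Definition inPhi (H : 'M[K]_n -> Prop) (p q : 'I_n) :=
  p != q /\ forall x, H (Eroot p q x).
(* affine root subgroup with finite part alpha_pq: {1 + x s^{-m} E_pq} = {1 + x t^m E_pq} *)
Definition affRoot (p q : 'I_n) (m : nat) (x : K) : LMat :=
  1%:M + (x *: 'X^m) *: delta_mx p q.

Definition swapn (i a : nat) : nat :=
  if a == i then n.-1 else if a == n.-1 then i else a.
Definition wmat (i : nat) : 'M[K]_n := \matrix_(a, b) (nat_of_ord b == swapn i a)%:R.
Definition inXi (i : nat) (g : 'M[K]_n) :=
  exists b q, inB b /\ inQ q /\ g = b *m wmat i *m q.
Definition inT (d : 'M[K]_n) :=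
  (forall i j : 'I_n, i != j -> d i j = 0) /\ d \in unitmx.
(* prod_{j>=2} exp(u_j E_{1j}) = 1 + sum_{j>=2} u_j E_{1j}   (0-based: row 0, columns >= 1) *)
Definition Urow (u : 'I_n -> K) : 'M[K]_n :=
  \matrix_(a, b) ((a == b)%:R +
     (if (nat_of_ord a == 0%N) && (nat_of_ord b != 0%N) then u b else 0)).
Definition inX1 (g : 'M[K]_n) :=
  exists d u q, inT d /\ inQ q /\ g = d *m Urow u *m wmat 0 *m q.
Definition inX1j (j : 'I_n) (g : 'M[K]_n) :=
  exists d u q, inT d /\ inQ q /\ u j = 0 /\ g = d *m Urow u *m wmat 0 *m q.
Definition inX1circ (g : 'M[K]_n) :=
  inX1 g /\ forall j : 'I_n, nat_of_ord j != 0%N -> ~ inX1j j g.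
Definition gcirc : 'M[K]_n := Urow (fun _ => 1) *m wmat 0.

Definition Tj (j : nat) (x : K) : 'M[K]_n :=
  \matrix_(a, b) (if a == b then (if nat_of_ord a == j then x else 1) else 0).
Definition inTj (j : nat) (A : 'M[K]_n) := exists2 x, x != 0 & A = Tj j x.

Definition inY (p q : 'I_n) (A : 'M[K]_n) :=
  exists2 x, x != 0 &
  A = Tj q x *m Eroot p q
        (if (nat_of_ord p != 0%N) && (nat_of_ord q != 0%N) then 1 - x else x - 1).
Definition inYt (p q : 'I_n) (m : nat) (h : LMat) :=
  (exists d x, inT d /\ h = constM d *m affRoot p q m x) /\ inY p q (ev1 h).

(* regular functions: polynomials in the coefficients (h a b)`_m *)
Inductive regfun : (LMat -> K) -> Prop :=
  | rf_const (c : K) : regfun (fun _ => c)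
  | rf_coord (a b : 'I_n) (m : nat) : regfun (fun h => (h a b)`_m)
  | rf_add f g : regfun f -> regfun g -> regfun (fun h => f h + g h)
  | rf_mul f g : regfun f -> regfun g -> regfun (fun h => f h * g h).

Definition zclosed (Z : LMat -> Prop) :=
  exists F : (LMat -> K) -> Prop,
    (forall f, F f -> regfun f) /\ forall h, Z h <-> (forall f, F f -> f h = 0).

Definition zconnected (C : LMat -> Prop) :=
  forall Z1 Z2, zclosed Z1 -> zclosed Z2 ->
    (forall h, C h -> Z1 h \/ Z2 h) ->
    (forall h, C h -> Z1 h -> Z2 h -> False) ->
    (forall h, C h -> Z1 h) \/ (forall h, C h -> Z2 h).

Definition idcomp (G : LMat -> Prop) (h : LMat) :=
  exists C : LMat -> Prop,
    zconnected C /\ (forall x, C x -> G x) /\ C 1%:M /\ C h.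

End Defs.

(* Main.v *)
Require Import Defs.
From HB Require Import structures.
From mathcomp Require Import all_boot all_order all_algebra all_fingroup.
From Stdlib Require Import Classical FunctionalExtensionality.
From mathcomp Require Import ring.
Import GRing.Theory.
Local Open Scope ring_scope.

Section Conn.
Variables (K : closedFieldType) (n : nat).

Definition pfun (f : K -> K) := exists pe : {poly K}, forall y, f y = pe.[y].

Lemma pfun_const c : pfun (fun _ => c).
Proof. by exists c%:P => y; rewrite hornerC. Qed.
Lemma pfun_id : pfun (fun y => y).
Proof. by exists 'X => y; rewrite hornerX. Qed.
Lemma pfun_add f g : pfun f -> pfun g -> pfun (fun y => f y + g y).
Proof. by move=> [p Hp] [q Hq]; exists (p + q) => y; rewrite hornerD Hp Hq. Qed.
Lemma pfun_mul f g : pfun f -> pfun g -> pfun (fun y => f y * g y).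
Proof. by move=> [p Hp] [q Hq]; exists (p * q) => y; rewrite hornerM Hp Hq. Qed.
Lemma pfun_opp f : pfun f -> pfun (fun y => - f y).
Proof. by move=> [p Hp]; exists (- p) => y; rewrite hornerN Hp. Qed.

Lemma poly_all0 (p : {poly K}) : (forall z, p.[z] = 0) -> p = 0.
Proof.
move=> H; apply/eqP; apply/negPn/negP => /closed_nonrootP [x].
by rewrite /root H eqxx.
Qed.

Lemma conn_param (P : K -> LMat K n) (r : {poly K}) : r != 0 ->
  (forall a b m, pfun (fun y => (P y a b)`_m)) ->
  zconnected K n (fun h => exists2 y, r.[y] != 0 & h = P y).
Proof.
move=> r0 HP.
have Hreg : forall f, regfun K n f -> pfun (fun y => f (P y)).
  move=> f; elim => [c|a b m|f1 f2 _ H1 _ H2|f1 f2 _ H1 _ H2].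
  - exact: pfun_const.
  - exact: HP.
  - exact: pfun_add.
  - exact: pfun_mul.
move=> Z1 Z2 [F1 [HF1 HZ1]] [F2 [HF2 HZ2]] Hcov _.
case: (classic (forall h, (exists2 y, r.[y] != 0 & h = P y) -> Z1 h)) => [H|H]; first by left.
right.
have [h0 nZ] := not_all_ex_not _ _ H.
have [Ch0 nZ1] := imply_to_and _ _ nZ.
case: Ch0 => y0 ry0 eh0; subst h0.
have : ~ (forall f, F1 f -> f (P y0) = 0) by move=> H'; apply: nZ1; apply/HZ1.
move=> /not_all_ex_not [f1 Hf1].
have [F1f1 f1n0] := imply_to_and _ _ Hf1.
have [p1 Hp1] := Hreg _ (HF1 _ F1f1).
move=> h [y ry ->]; apply/HZ2 => f2 F2f2.
have [p2 Hp2] := Hreg _ (HF2 _ F2f2).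
have E : p2 * p1 * r = 0.
  apply: poly_all0 => z; rewrite !hornerM.
  have [rz|rz] := eqVneq r.[z] 0; first by rewrite rz mulr0.
  have [p1z|p1z] := eqVneq p1.[z] 0; first by rewrite p1z mulr0 mul0r.
  suff -> : p2.[z] = 0 by rewrite !mul0r.
  rewrite -Hp2.
  have Z2z : Z2 (P z).
    have [Z1z|//] : Z1 (P z) \/ Z2 (P z) by apply: Hcov; exists z.
    by exfalso; move/HZ1: Z1z => /(_ _ F1f1); rewrite Hp1; apply/eqP.
  by move/HZ2: Z2z; apply.
have p10 : p1 != 0 by apply/eqP => p10; apply: f1n0; rewrite Hp1 p10 horner0.
move/eqP: E; rewrite !mulf_eq0 (negbTE r0) (negbTE p10) !orbF => /eqP p20.
by rewrite Hp2 p20 horner0.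
Qed.
End Conn.

Lemma diag_mulmx (R : pzRingType) n (D A : 'M[R]_n) :
  (forall i j, i != j -> D i j = 0) -> forall i j, (D *m A) i j = D i i * A i j.
Proof.
move=> HD i j; rewrite mxE (bigD1 i) //= big1 ?addr0 // => k /negbTE ki.
by rewrite HD ?mul0r // eq_sym ki.
Qed.

Lemma mulmx_diag (R : pzRingType) m n (D : 'M[R]_n) (A : 'M[R]_(m, n)) :
  (forall i j, i != j -> D i j = 0) -> forall i j, (A *m D) i j = A i j * D j j.
Proof.
move=> HD i j; rewrite mxE (bigD1 j) //= big1 ?addr0 // => k /negbTE ki.
by rewrite HD ?mulr0 // ki.
Qed.

Lemma diag_det_nz (K : fieldType) n (D : 'M[K]_n) :
  (forall i j, i != j -> D i j = 0) -> D \in unitmx -> forall i, D i i != 0.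
Proof.
move=> HD; rewrite unitmxE unitfE det_trig; last first.
  by apply/is_trig_mxP => i j ij; apply: HD; rewrite neq_ltn ij.
by rewrite prodf_seq_neq0 => /allP H i; apply: (H i); rewrite mem_index_enum.
Qed.

Section S.
Variables (K : fieldType) (n : nat).

Lemma sum_perm_if (sigma : 'S_n) c (F : 'I_n -> K) :
  \sum_(a < n) (if sigma a == c then F a else 0) = F ((sigma^-1)%g c).
Proof.
rewrite (bigD1 ((sigma^-1)%g c)) //= permKV eqxx big1 ?addr0 // => a ac.
case: eqP => // E; move: ac; by rewrite -E permK eqxx.
Qed.

Lemma conjInvE sigma lam (M : LArr K n) c d e :
  conjInv K n sigma lam M c d e = M ((sigma^-1)%g c) ((sigma^-1)%g d) (e + lam c - lam d).
Proof.
rewrite /conjInv.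
rewrite (eq_bigr (fun a => if sigma a == c then
   (\sum_(b < n) if sigma b == d then M a b (e + lam c - lam d) else 0) else 0)).
  by rewrite sum_perm_if sum_perm_if.
move=> a _; case: eqP => _ /=; first by [].
by rewrite big1.
Qed.

Lemma toLArr_diag (D : 'M[K]_n) (h : LMat K n) a b e :
  (forall i j, i != j -> D i j = 0) ->
  toLArr K n (constM K n D *m h) a b e = D a a * toLArr K n h a b e.
Proof.
move=> HD.
have E : (constM K n D *m h) a b = (D a a)%:P * h a b.
  rewrite diag_mulmx ?mxE // => i j ij; by rewrite mxE HD.
by rewrite /toLArr E; case: e => [[|m]|m] /=; rewrite ?coefCM ?mulr0.
Qed.

Lemma iwahori_scale (M : LArr K n) (s : 'I_n -> K) :
  inIwahori K n M -> (forall c, s c != 0) ->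
  inIwahori K n (fun c d e => s c * M c d e).
Proof.
move=> [Hneg [Hup Hu]] Hs; split; first by move=> c d e e0; rewrite Hneg ?mulr0.
have -> : red0 K n (fun c d e => s c * M c d e) = diag_mx (\row_c s c) *m red0 K n M.
  by rewrite mul_diag_mx; apply/matrixP => i j; rewrite !mxE.
split.
  by move=> i j ji; rewrite mul_diag_mx !mxE; have := Hup i j ji; rewrite mxE => ->; rewrite mulr0.
rewrite unitmx_mul Hu andbT unitmxE det_diag unitfE prodf_seq_neq0.
by apply/allP => i _ /=; rewrite mxE.
Qed.

Lemma inS_diag sigma lam (D : 'M[K]_n) h :
  inT K n D -> inS K n sigma lam h -> inS K n sigma lam (constM K n D *m h).
Proof.
move=> [HD Du] [[Hdet [Hlow Hu]] Hiw].
have Dnz := @diag_det_nz K n D HD Du.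
have HcD : forall i j, i != j -> constM K n D i j = 0 by move=> i j ij; rewrite mxE HD.
split; [split|].
- move: Hdet; rewrite /inGLpoly det_mulmx unitrM => ->; rewrite andbT /constM det_map_mx.
  by rewrite rmorph_unit // -unitmxE.
- have -> : ev0 K n (constM K n D *m h) = D *m ev0 K n h.
    apply/matrixP => i j; rewrite [RHS]diag_mulmx // [LHS]mxE diag_mulmx //.
    rewrite mxE hornerCM mxE.
    done.
  split; last by rewrite unitmx_mul Du.
  by move=> i j ij; rewrite diag_mulmx // Hlow ?mulr0.
- have -> : conjInv K n sigma lam (toLArr K n (constM K n D *m h)) =
     (fun c d e => D ((sigma^-1)%g c) ((sigma^-1)%g c) *
                     conjInv K n sigma lam (toLArr K n h) c d e).
    by apply: functional_extensionality => c; apply: functional_extensionality => d;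
       apply: functional_extensionality => e; rewrite !conjInvE toLArr_diag.
  by apply: iwahori_scale.
Qed.

End S.
Section C.
Variables (K : fieldType) (n : nat).

Lemma toLArr1 a b e :
  toLArr K n 1%:M a b e = if (a == b) && (e == 0) then 1 else 0.
Proof.
rewrite /toLArr mxE; case: e => [[|m]|m]; case: (a == b) => //=;
  by rewrite ?mulr1n ?mulr0n ?coefC ?coef0.
Qed.

Lemma inS1 sigma lam : inS K n sigma lam 1%:M.
Proof.
have conj1 : forall c d e, conjInv K n sigma lam (toLArr K n 1%:M) c d e =
    if (c == d) && (e == 0) then 1 else 0.
  move=> c d e; rewrite conjInvE toLArr1 (inj_eq (@perm_inj _ _)).
  by case: eqP => // ->; rewrite addrK.
split; [split|].
- by rewrite /inGLpoly det1 unitr1.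
- have -> : ev0 K n 1%:M = 1%:M.
    by apply/matrixP => i j; rewrite !mxE hornerMn hornerC.
  split; last exact: unitmx1.
  by move=> i j ij; rewrite mxE; case: eqP => // E; move: ij; rewrite E ltnn.
- split.
    move=> c d e e0; rewrite conj1; case: (c == d) => //=.
    by case: eqP => // E; move: e0; rewrite E.
  have -> : red0 K n (conjInv K n sigma lam (toLArr K n 1%:M)) = 1%:M.
    by apply/matrixP => i j; rewrite !mxE conj1 andbT; case: (i == j).
  split; last exact: unitmx1.
  by move=> i j ij; rewrite mxE; case: eqP => // E; move: ij; rewrite E ltnn.
Qed.
End C.
Section D.
Variables (K : fieldType) (n : nat).

Definition erow : 'rV[K]_n := \row_j (nat_of_ord j == n.-1)%:R.

Lemma erow_mulE (M : 'M[K]_n) (i j : 'I_n) : nat_of_ord i = n.-1 ->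
  (erow *m M) 0 j = M i j.
Proof.
move=> Hi; rewrite mxE (bigD1 i) //= big1 ?addr0; first by rewrite mxE Hi eqxx mul1r.
move=> k ki; rewrite mxE; case: eqP => [Hk|]; last by rewrite mul0r.
have E : k = i by apply: val_inj; rewrite /= Hk Hi.
by rewrite E eqxx in ki.
Qed.

Lemma lastOrd (j : 'I_n) : (n.-1 < n)%N.
Proof. by rewrite ltn_predL; apply: leq_ltn_trans (ltn_ord j). Qed.

Lemma inQ_erow q : inQ K n q -> erow *m q = erow.
Proof.
move=> [Hq _]; apply/rowP => j.
rewrite (@erow_mulE _ (Ordinal (lastOrd j))) // Hq // mxE.
by [].
Qed.

Lemma coset_fix (g x : 'M[K]_n) (v : 'rV[K]_n) : g \in unitmx -> x \in unitmx ->
  v *m g = erow -> v *m x = v -> cosetEq K n (x *m g) g.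
Proof.
move=> gu xu Hv Hx; exists (invmx g *m x *m g).
  split; last by rewrite !unitmx_mul unitmx_inv gu xu.
  move=> i j Hi.
  have -> : (invmx g *m x *m g) i j = (erow *m (invmx g *m x *m g)) 0 j by rewrite (erow_mulE _ _ _ Hi).
  rewrite !mulmxA.
  have -> : erow *m invmx g = v by rewrite -Hv -mulmxA mulmxV // mulmx1.
  by rewrite Hx Hv mxE.
by rewrite !mulmxA mulmxV // mul1mx.
Qed.

Lemma coset_split (M q0 : 'M[K]_n) (v : 'rV[K]_n) : inQ K n q0 ->
  v *m (M *m q0) = erow -> v *m M = erow.
Proof.
move=> Hq E; have qu : q0 \in unitmx by case: Hq.
have : v *m M *m q0 *m invmx q0 = erow *m invmx q0 by rewrite -E mulmxA.
rewrite -mulmxA mulmxV // mulmx1 => ->.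
by rewrite -{1}(inQ_erow _ Hq) -mulmxA mulmxV // mulmx1.
Qed.

Lemma coset_v (g : 'M[K]_n) : g \in unitmx -> exists v : 'rV[K]_n, v *m g = erow.
Proof. by move=> gu; exists (erow *m invmx g); rewrite -mulmxA mulVmx // mulmx1. Qed.

Lemma coset_inv (g x : 'M[K]_n) (v : 'rV[K]_n) : g \in unitmx ->
  cosetEq K n (x *m g) g -> v *m g = erow -> v *m x = v.
Proof.
move=> gu [q Hq E] Hv.
have : v *m x *m g = v *m g by rewrite -mulmxA E mulmxA Hv (inQ_erow _ Hq).
by move=> /(congr1 (mulmx^~ (invmx g))); rewrite -!mulmxA mulmxV // !mulmx1.
Qed.

Lemma swapnK i a : swapn n i (swapn n i a) = a.
Proof.
rewrite /swapn; case: (eqVneq a i) => [->|ai]; rewrite ?eqxx.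
  by case: (eqVneq n.-1 i).
case: (eqVneq a n.-1) => [->|an]; first by rewrite eqxx.
by rewrite (negbTE ai) (negbTE an).
Qed.

Lemma wmat_row (u : 'rV[K]_n) i (a k : 'I_n) : nat_of_ord k = swapn n i a ->
  (u *m wmat K n i) 0 k = u 0 a.
Proof.
move=> Hk; rewrite mxE (bigD1 a) //= big1 ?addr0; first by rewrite mxE Hk eqxx mulr1.
move=> b ba; rewrite mxE Hk; case: eqP => [E|]; last by rewrite mulr0.
have : nat_of_ord b = nat_of_ord a by rewrite -(swapnK i b) -E swapnK.
by move/val_inj => E'; rewrite E' eqxx in ba.
Qed.

Lemma row_Tj (v : 'rV[K]_n) (j : nat) c :
  (forall k : 'I_n, nat_of_ord k = j -> v 0 k = 0) -> v *m Tj K n j c = v.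
Proof.
move=> H; apply/rowP => k; rewrite mulmx_diag; last by move=> a b /negbTE ab; rewrite mxE ab.
rewrite mxE eqxx; case: eqP => [E|]; last by rewrite mulr1.
by rewrite H // mul0r.
Qed.
End D.
Section E.
Variables (K : closedFieldType) (n : nat).

Lemma Tj_inT (j : nat) (x : K) : x != 0 -> inT K n (Tj K n j x).
Proof.
move=> x0; split; first by move=> a b /negbTE ab; rewrite mxE ab.
have -> : Tj K n j x = diag_mx (\row_a (if nat_of_ord a == j then x else 1)).
  by apply/matrixP => a b; rewrite !mxE; case: eqP => [->|]; rewrite ?eqxx ?mulr1n ?mulr0n.
rewrite unitmxE det_diag unitfE prodf_seq_neq0; apply/allP => a _ /=.
by rewrite mxE; case: ifP => _ //; exact: oner_neq0.
Qed.

Lemma Tj1 (j : nat) : Tj K n j 1 = 1%:M.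
Proof. by apply/matrixP => a b; rewrite !mxE; case: eqP => //; case: eqP. Qed.

Lemma constM1 : constM K n 1%:M = 1%:M.
Proof. by apply/matrixP => a b; rewrite !mxE; case: eqP. Qed.

Lemma ev1_constM (D : 'M[K]_n) : ev1 K n (constM K n D) = D.
Proof. by apply/matrixP => a b; rewrite !mxE hornerC. Qed.

Lemma inS_constM sigma lam (D : 'M[K]_n) : inT K n D -> inS K n sigma lam (constM K n D).
Proof. by move=> HD; rewrite -[constM K n D]mulmx1; apply: inS_diag => //; apply: inS1. Qed.

Lemma pfun_Tj (j : nat) a b m : pfun K (fun y : K => (constM K n (Tj K n j y) a b)`_m).
Proof.
have E : forall y : K, (constM K n (Tj K n j y) a b)`_m =
   if m == 0%N then (if a == b then (if nat_of_ord a == j then y else 1) else 0) else 0.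
  by move=> y; rewrite !mxE coefC.
rewrite (functional_extensionality _ _ E).
case: (m == 0%N); last exact: pfun_const.
case: (a == b); last exact: pfun_const.
case: (nat_of_ord a == j); [exact: pfun_id | exact: pfun_const].
Qed.

Lemma Tj_idcomp sigma lam (g : 'M[K]_n) (j : nat) : g \in unitmx ->
  (forall v : 'rV[K]_n, v *m g = erow K n -> forall k : 'I_n, nat_of_ord k = j -> v 0 k = 0) ->
  forall x, x != 0 -> idcomp K n (inAut K n sigma lam g) (constM K n (Tj K n j x)).
Proof.
move=> gu Hv x x0.
exists (fun h => exists2 y, ('X : {poly K}).[y] != 0 & h = constM K n (Tj K n j y)).
split; first by apply: conn_param; [rewrite polyX_eq0 | exact: pfun_Tj].
split; last first.
  split; first by exists 1; rewrite ?hornerX ?oner_eq0 // Tj1 constM1.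
  by exists x; rewrite ?hornerX.
move=> h [y]; rewrite hornerX => y0 ->.
have HS := inS_constM sigma lam _ (Tj_inT j y y0).
split => //; split; first by exists (constM K n (Tj K n j y)).
rewrite ev1_constM.
have [v Ev] := @coset_v K n g gu.
apply: (@coset_fix K n _ _ v gu _ Ev); first by case: (Tj_inT j y y0).
by apply: row_Tj; apply: Hv.
Qed.
End E.
Section F.
Variables (K : closedFieldType) (n : nat).

Lemma swapn_lt i a : (i < n)%N -> (a < n)%N -> (swapn n i a < n)%N.
Proof.
move=> i_lt a_lt; rewrite /swapn; case: eqP => _; first by rewrite ltn_predL (leq_ltn_trans _ a_lt).
by case: eqP.
Qed.

Lemma swapn0_last (a : 'I_n) : (swapn n 0 a == n.-1) = (nat_of_ord a == 0%N).
Proof.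
rewrite /swapn; move: (nat_of_ord a) => a'.
case: (eqVneq a' 0%N) => [_|a0] //=; first by rewrite eqxx.
case: (eqVneq a' n.-1) => [an|an].
  by rewrite eq_sym -an (negbTE a0).
by rewrite (negbTE an).
Qed.

Definition ordz (k : 'I_n) : 'I_n := Ordinal (leq_ltn_trans (leq0n k) (ltn_ord k)).

Lemma row_Urow (v : 'rV[K]_n) u (k : 'I_n) :
  (v *m Urow K n u) 0 k = v 0 k + (if nat_of_ord k != 0%N then v 0 (ordz k) * u k else 0).
Proof.
rewrite mxE.
rewrite (eq_bigr (fun b => v 0 b * (b == k)%:R +
   (if (nat_of_ord b == 0%N) && (nat_of_ord k != 0%N) then v 0 b * u k else 0))); last first.
  by move=> b _; rewrite mxE mulrDr; case: ifP; rewrite ?mulr0.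
rewrite big_split /=; congr (_ + _).
  rewrite (bigD1 k) //= eqxx mulr1 big1 ?addr0 // => b /negbTE ->; by rewrite mulr0.
case: (nat_of_ord k != 0%N); last by rewrite big1 // => b _; rewrite andbF.
rewrite (bigD1 (ordz k)) //= big1 ?addr0 // => b bo; rewrite andbT.
case: eqP => // b0; move: bo; have -> : b = ordz k by apply: val_inj.
by rewrite eqxx.
Qed.

Lemma row_Eroot (w : 'rV[K]_n) p q c (k : 'I_n) :
  (w *m Eroot K n p q c) 0 k = w 0 k + (if k == q then c * w 0 p else 0).
Proof.
rewrite /Eroot mulmxDr mulmx1 mxE [in X in _ + X = _]mxE; congr (_ + _).
rewrite (bigD1 p) //= big1 ?addr0.
  by rewrite !mxE eqxx /=; case: eqP => _ /=; rewrite ?mulr1 ?mulr0 // mulrC.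
by move=> b /negbTE bp; rewrite !mxE bp /= mulr0 mulr0.
Qed.

Lemma Eroot_unit p q c : p != q -> Eroot K n p q c \in unitmx.
Proof.
move=> pq.
have : Eroot K n p q c *m Eroot K n p q (- c) = 1%:M.
  rewrite /Eroot mulmxDr mulmx1 mulmxDl mul1mx -scalemxAl -scalemxAr mul_delta_mx_cond.
  by rewrite eq_sym (negbTE pq) scaler0 scaler0 addr0 scaleNr addrK.
by case/mulmx1_unit.
Qed.

Lemma ev1_diag_mul (D : 'M[K]_n) (A : LMat K n) :
  (forall i j, i != j -> D i j = 0) ->
  ev1 K n (constM K n D *m A) = D *m ev1 K n A.
Proof.
move=> HD; apply/matrixP => a b.
rewrite [RHS]diag_mulmx // [LHS]mxE diag_mulmx; last by move=> i j ij; rewrite mxE HD.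
by rewrite !mxE hornerCM.
Qed.

Lemma ev1_affRoot p q m x : ev1 K n (affRoot K n p q m x) = Eroot K n p q x.
Proof.
apply/matrixP => a b; rewrite !mxE hornerD hornerM hornerZ hornerXn expr1n mulr1.
by rewrite !hornerMn hornerC.
Qed.

Definition cf (p q : 'I_n) (y : K) :=
  if (nat_of_ord p != 0%N) && (nat_of_ord q != 0%N) then 1 - y else y - 1.

Lemma Y_idcomp sigma lam (g : 'M[K]_n) p q m : g \in unitmx -> p != q ->
  (forall x, inS K n sigma lam (affRoot K n p q m x)) ->
  (forall v : 'rV[K]_n, v *m g = erow K n -> forall y, y != 0 ->
      v *m (Tj K n q y *m Eroot K n p q (cf p q y)) = v) ->
  forall h, inYt K n p q m h -> idcomp K n (inAut K n sigma lam g) h.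
Proof.
move=> gu pq HS Hv h [[d [x [HdT Eh]]] [y y0 Ey]].
have HTd : forall y, (forall i j : 'I_n, i != j -> Tj K n q y i j = 0).
  by move=> y' i j /negbTE ij; rewrite mxE ij.
pose P y := constM K n (Tj K n q y) *m affRoot K n p q m (cf p q y).
have Hd : forall i j, i != j -> d i j = 0 by case: HdT.
have Ed : d = Tj K n q y /\ x = cf p q y.
  move: Ey; rewrite Eh ev1_diag_mul // ev1_affRoot => Ey.
  have Ee : forall a b, d a a * Eroot K n p q x a b = Tj K n q y a a * Eroot K n p q (cf p q y) a b.
    by move=> a b; rewrite -(@diag_mulmx _ _ d _ Hd a b) -(@diag_mulmx _ _ (Tj K n q y) _ (HTd y) a b) Ey.
  have Edd : forall a, d a a = Tj K n q y a a.
    move=> a; have := Ee a a; rewrite !mxE eqxx /=.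
    by case: (eqVneq a p) => [->|]; rewrite ?(negbTE pq) ?andbF /= ?mulr0 ?addr0 ?mulr1.
  split.
    apply/matrixP => a b; case: (eqVneq a b) => [->|ab]; first exact: Edd.
    by rewrite Hd // HTd.
  have := Ee p q; rewrite !mxE !eqxx (negbTE pq) /=.
  have pqn : (nat_of_ord p == nat_of_ord q) = false by exact: (negbTE pq).
  have -> : d p p = 1 by rewrite Edd mxE eqxx pqn.
  by rewrite !add0r !mulr1 !mul1r pqn mul1r.
case: Ed => Edt Ex.
exists (fun h => exists2 y, ('X : {poly K}).[y] != 0 & h = P y).
split.
  apply: conn_param; first by rewrite polyX_eq0.
  move=> a b l.
  have E : forall y, (P y a b)`_l = (if a == q then y else 1) *
     (((1%:M : 'M[{poly K}]_n) a b)`_l + cf p q y * (('X^m : {poly K}) * delta_mx p q a b)`_l).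
    move=> y'; rewrite /P diag_mulmx; last by move=> i j ij; rewrite mxE HTd.
    rewrite !mxE eqxx coefCM; congr (_ * _).
    by rewrite coefD -scalerAl coefZ.
  rewrite (functional_extensionality _ _ E).
  apply: pfun_mul; first by case: (a == q); [exact: pfun_id|exact: pfun_const].
  apply: pfun_add; first exact: pfun_const.
  apply: pfun_mul; last exact: pfun_const.
  rewrite /cf; case: (_ && _).
    by apply: pfun_add; [exact: pfun_const| apply: pfun_opp; exact: pfun_id].
  by apply: pfun_add; [exact: pfun_id| exact: pfun_const].
split; last first.
  split.
    exists 1; first by rewrite hornerX oner_neq0.
    rewrite /P Tj1 constM1 mul1mx /affRoot /cf.
    by rewrite (_ : (if _ then _ else _) = 0) ?scale0r ?addr0 //; case: ifP; rewrite subrr.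
  by exists y; rewrite ?hornerX // Eh Edt Ex.
move=> h' [y']; rewrite hornerX => y0' ->.
have HS' : inS K n sigma lam (P y') by apply: inS_diag; [exact: Tj_inT|exact: HS].
split => //; split; first by exists (P y').
rewrite /P ev1_diag_mul; last exact: HTd.
rewrite ev1_affRoot.
have [v Ev] := @coset_v K n g gu.
apply: (@coset_fix K n _ _ v gu _ Ev); last exact: (Hv v Ev y' y0').
rewrite unitmx_mul Eroot_unit // andbT; by case: (@Tj_inT K n q y' y0').
Qed.
End F.
Lemma upper_diag_nz (K : fieldType) n (b : 'M[K]_n) : inB K n b -> forall i, b i i != 0.
Proof.
move=> [Hup bu]; move: bu; rewrite unitmxE unitfE -det_tr det_trig; last first.
  by apply/is_trig_mxP => i j ij; rewrite mxE Hup.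
rewrite prodf_seq_neq0 => /allP H i; have := H i; rewrite mem_index_enum mxE; exact.
Qed.

Theorem proposition8p5 (k : finFieldType) (K : closedFieldType)
  (iota : {rmorphism k -> K}) (n : nat) (sigma : 'S_n) (lam : 'I_n -> int)
  (g0 : 'M[k]_n) :
  g0 \in unitmx ->
  let g := map_mx iota g0 in
  let Aut := inAut K n sigma lam g in
  (* (i) *)
  (forall i : 'I_n, (0 < i)%N -> inXi K n i g ->
     forall A, inTj K n 0 A -> idcomp K n Aut (constM K n A)) /\
  (* (ii) *)
  (forall j : 'I_n, (0 < j)%N -> inX1j K n j g ->
     forall A, inTj K n j A -> idcomp K n Aut (constM K n A)) /\
  (* (iii) *)
  (~ inOmega K n sigma lam -> cosetEq K n g (gcirc K n) ->
     forall p q : 'I_n, inPhi K n (inG K n sigma lam) p q ->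
     forall m : nat, (forall x, inS K n sigma lam (affRoot K n p q m x)) ->
     forall h, inYt K n p q m h -> idcomp K n Aut h) /\
  (* (iv) *)
  (inOmega K n sigma lam -> inX1circ K n g ->
     forall h, Aut h -> h = 1%:M).
Proof.
move=> g0u g Aut.
have gu : g \in unitmx by rewrite /g map_unitmx.
split; [|split; [|split]].
-
  move=> i i0 [b [q [Hb [Hq Eg]]]] A [x x0 ->].
  apply: Tj_idcomp => // v Ev kk kk0.
  have Ev' : (v *m b) *m wmat K n i = erow K n.
    by rewrite -mulmxA; apply: (@coset_split K n _ _ _ Hq); rewrite -Eg.
  have n2 : (0 < n.-1)%N by rewrite -ltnS prednK ?(leq_ltn_trans _ (ltn_ord i)) // (leq_trans i0) // -ltnS prednK ?(ltn_ord i) // (leq_ltn_trans _ (ltn_ord i)).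
  have sk : nat_of_ord kk = swapn n i kk.
    rewrite /swapn kk0 eq_sym (negbTE (lt0n_neq0 i0)).
    by case: eqP => // E; move: n2; rewrite -E ltnn.
  have := @wmat_row K n (v *m b) i kk kk sk; rewrite Ev' mxE kk0.
  have -> : (0 == n.-1) = false by apply/negbTE; rewrite eq_sym -lt0n.
  move=> /esym E.
  have : (v *m b) 0 kk = v 0 kk * b kk kk.
    rewrite mxE (bigD1 kk) //= big1 ?addr0 // => a ak.
    case: Hb => Hup _; rewrite Hup ?mulr0 // kk0 lt0n.
    by apply: contra ak => /eqP a0; apply/eqP/val_inj; rewrite /= a0 kk0.
  rewrite E => /esym /eqP; rewrite mulf_eq0 (negbTE (@upper_diag_nz K n b Hb kk)) orbF.
  by move/eqP.
-
  move=> j j0 [d [u [q [[Hd du] [Hq [uj Eg]]]]]] A [x x0 ->].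
  apply: Tj_idcomp => // v Ev kk kj.
  have -> : kk = j by apply: val_inj.
  have Ev' : (v *m d *m Urow K n u) *m wmat K n 0 = erow K n.
    by rewrite -!mulmxA; apply: (@coset_split K n _ _ _ Hq); by rewrite -Ev Eg !mulmxA.
  have sk := @swapn_lt n 0 j (leq_ltn_trans (leq0n j) (ltn_ord j)) (ltn_ord j).
  have := @wmat_row K n (v *m d *m Urow K n u) 0 j (Ordinal sk) erefl.
  rewrite Ev' mxE /= swapn0_last (negbTE (lt0n_neq0 j0)) row_Urow uj mulr0.
  rewrite (lt0n_neq0 j0) addr0 mulmx_diag // => /esym /eqP.
  by rewrite mulf_eq0 (negbTE (@diag_det_nz K n d Hd du j)) orbF => /eqP.
-
  move=> _ [q0 Hq0 Eg] p q [pq _] m HaffS h Hh.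
  apply: (@Y_idcomp K n sigma lam g p q m gu pq HaffS _ h Hh) => v Ev y y0.
  have Ev' : (v *m Urow K n (fun _ => 1)) *m wmat K n 0 = erow K n.
    by rewrite -mulmxA; apply: (@coset_split K n _ _ _ Hq0); rewrite -Eg.
  have Hz : forall kk : 'I_n, v 0 kk + (if nat_of_ord kk != 0%N then v 0 (ordz n kk) * 1 else 0)
      = (nat_of_ord kk == 0%N)%:R.
    move=> kk; have sk := @swapn_lt n 0 kk (leq_ltn_trans (leq0n kk) (ltn_ord kk)) (ltn_ord kk).
    have := @wmat_row K n (v *m Urow K n (fun _ => 1)) 0 kk (Ordinal sk) erefl.
    by rewrite Ev' mxE /= swapn0_last row_Urow => <-.
  have v0 : forall kk : 'I_n, nat_of_ord kk = 0%N -> v 0 kk = 1.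
    by move=> kk kk0; have := Hz kk; rewrite kk0 /= addr0.
  have vval : forall kk : 'I_n, v 0 kk = if nat_of_ord kk == 0%N then 1 else -1.
    move=> kk; case: eqP => [/v0 //|/eqP kk0].
    have := Hz kk; rewrite kk0 (v0 (ordz n kk)) // mulr1 (negbTE kk0) => /eqP.
    by rewrite addr_eq0 => /eqP.
  apply/rowP => kk; rewrite mulmxA row_Eroot !mulmx_diag; try by move=> a b /negbTE ab; rewrite mxE ab.
  rewrite !mxE !eqxx.
  case: (eqVneq kk q) => [->|kq]; last first.
    have kq' : (nat_of_ord kk == nat_of_ord q) = false by exact: (negbTE kq).
    by rewrite kq' mulr1 addr0.
  have pq' : (nat_of_ord p == nat_of_ord q) = false by exact: (negbTE pq).
  rewrite eqxx pq' mulr1 !vval /cf.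
  case: (eqVneq (nat_of_ord p) 0%N) => [p0|p0]; case: (eqVneq (nat_of_ord q) 0%N) => [q0'|q0'] /=.
  + have : nat_of_ord p = nat_of_ord q by rewrite p0 q0'.
    by move/val_inj => E; rewrite E eqxx in pq.
  + ring.
  + ring.
  + ring.
-
  move=> Om [[d [u [q [[Hd du] [Hq Eg]]]]] Hnot] h [HS [HG Hcos]].
  have [[_ [Hlow _]] Hiw] := HS.
  have [Hneg [Hup _]] := (Om (toLArr K n h)).1 Hiw.
  pose D := \matrix_(a, b) (h a b)`_0.
  have Eh : h = constM K n D.
    apply/matrixP => a b; rewrite !mxE; apply/polyP => l; rewrite coefC.
    case: l => [|l] //=; have := Hneg a b (Negz l) isT; by rewrite /toLArr.
  have Ddiag : forall i j, i != j -> D i j = 0.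
    move=> i j; rewrite neq_ltn => /orP [ij|ji].
      by have := Hlow i j ij; rewrite !mxE horner_coef0.
    by have := Hup i j ji; rewrite !mxE.
  rewrite Eh ev1_constM in Hcos.
  have [v Ev] := @coset_v K n g gu.
  have vD : v *m D = v := @coset_inv K n g D v gu Hcos Ev.
  have Ev' : (v *m d *m Urow K n u) *m wmat K n 0 = erow K n.
    rewrite -!mulmxA; apply: (@coset_split K n _ _ _ Hq); by rewrite -Ev Eg !mulmxA.
  have Hz : forall kk : 'I_n, (v *m d) 0 kk +
      (if nat_of_ord kk != 0%N then (v *m d) 0 (ordz n kk) * u kk else 0)
      = (nat_of_ord kk == 0%N)%:R.
    move=> kk; have sk := @swapn_lt n 0 kk (leq_ltn_trans (leq0n kk) (ltn_ord kk)) (ltn_ord kk).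
    have := @wmat_row K n (v *m d *m Urow K n u) 0 kk (Ordinal sk) erefl.
    by rewrite Ev' mxE /= swapn0_last row_Urow => <-.
  have vd0 : forall kk : 'I_n, nat_of_ord kk = 0%N -> (v *m d) 0 kk = 1.
    by move=> kk kk0; have := Hz kk; rewrite kk0 /= addr0.
  have vnz : forall kk : 'I_n, v 0 kk != 0.
    move=> kk; apply/negP => /eqP vk.
    have vdk : (v *m d) 0 kk = 0 by rewrite mulmx_diag // vk mul0r.
    case: (eqVneq (nat_of_ord kk) 0%N) => [kk0|kk0].
      by move: (vd0 kk kk0); rewrite vdk => /eqP; rewrite eq_sym oner_eq0.
    have := Hz kk; rewrite kk0 (vd0 (ordz n kk)) // vdk add0r mul1r (negbTE kk0) => uk.
    apply: (Hnot kk kk0); exists d, u, q; split; first by [].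
    by split.
  have D1 : D = 1%:M.
    apply/matrixP => a b; rewrite [RHS]mxE.
    case: (eqVneq a b) => [<-|ab]; last by rewrite Ddiag.
    have := congr1 (fun w : 'rV[K]_n => w 0 a) vD; rewrite /= mulmx_diag //.
    by move=> /eqP; rewrite -{2}[v 0 a]mulr1 (inj_eq (mulfI (vnz a))) => /eqP ->.
  by rewrite Eh D1 constM1.
Qed.
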